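(* Let $r\in\mathbb Z_n$, $\mathsf V=\mathsf V(2,r)$, $k\ge2$, and $\lambda_r=q^{-r(r+1)}$. There is an algebra homomorphism $\mathsf H_k(q)\to\mathrm{End}_{\mathsf D_n}(\mathsf V^{\otimes k})$ sending $\mathsf s_i\mapsto\lambda_r^{-1}\check{\mathsf R}_i$ for $1\le i\le k-1$.
   Context: $\mathbb k$ algebraically closed of characteristic zero, $n\ge2$, $q\in\mathbb k$ a primitive $n$th root of unity. $\mathsf D_n$ is the Hopf algebra generated by $a,b,c,d$ with relations $ba=qab$, $db=qbd$, $bc=cb$, $ca=qac$, $dc=qcd$, $da-qad=1-bc$, $a^n=d^n=0$, $b^n=c^n=1$ and $\Delta(a)=a\otimes b+1\otimes a$, $\Delta(d)=d\otimes c+1\otimes d$, $\Delta(b)=b\otimes b$, $\Delta(c)=c\otimes c$. For $1\le\ell\le n$, $s\in\mathbb Z_n$, $\mathsf V(\ell,s)$ is the module with basis $v_1,\dots,v_\ell$ and action $a.v_j=v_{j+1}$ ($j<\ell$), $a.v_\ell=0$, $b.v_j=q^{s+j-1}v_j$, $c.v_j=q^{j-(s+\ell)}v_j$, $d.v_1=0$, $d.v_j=\alpha_{j-1}(\ell)v_{j-1}$ ($j>1$), $\alpha_i(\ell)=\frac{(q^i-1)(1-q^{i-\ell})}{q-1}$. With $[m]=1+q+\dots+q^{m-1}$, $[m]!=[m]\cdots[1]$, $[0]!=1$, the R-matrix is $\mathcal R=\frac1n\sum_{m,s,t=0}^{n-1}\frac{q^{-tm}}{[s]!}a^sb^t\otimes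 c^md^s$. $\mathsf R$ is the action of $\mathcal R$ on $\mathsf V\otimes\mathsf V$ ($a^sb^t$ on the first factor), $\sigma$ the flip, $\check{\mathsf R}=\sigma\mathsf R$, and $\check{\mathsf R}_i=\mathrm{id}^{\otimes(i-1)}\otimes\check{\mathsf R}\otimes\mathrm{id}^{\otimes(k-i-1)}$ acting on tensor slots $i,i+1$ of $\mathsf V^{\otimes k}$. The Iwahori–Hecke algebra $\mathsf H_k(q)$ is the $\mathbb k$-algebra with generators $\mathsf s_1,\dots,\mathsf s_{k-1}$ and relations $\mathsf s_i\mathsf s_j=\mathsf s_j\mathsf s_i$ ($|i-j|>1$), $\mathsf s_i\mathsf s_{i+1}\mathsf s_i=\mathsf s_{i+1}\mathsf s_i\mathsf s_{i+1}$ ($1\le i\le k-2$), $(\mathsf s_i-1)(\mathsf s_i+q^{-1})=0$ ($1\le i\le k-1$). *)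

(* Defs.v *)
From HB Require Import structures.
From mathcomp Require Import all_boot all_order all_algebra.

Import Order.TTheory GRing.Theory Num.Theory.
Local Open Scope ring_scope.

(* The module V(l,s) of D_n.  Basis v_1..v_l is indexed by 'I_l, index j
   standing for v_(j+1).  Convention: M i j = coefficient of v_(i+1) in
   x . v_(j+1) (column j = image of the j-th basis vector).                 *)

Definition alpha (K : fieldType) (q : K) (l : nat) (i : int) : K :=
  (q ^ i - 1) * (1 - q ^ (i - (l%:Z))) / (q - 1).

(* a.v_j = v_(j+1), a.v_l = 0 *)
Definition Vmx_a (K : fieldType) (l : nat) : 'M[K]_l :=
  \matrix_(i, j) ((i : nat) == j.+1)%:R.
(* b.v_j = q^(s+j-1) v_j  (1-based j) *)
Definition Vmx_b (K : fieldType) (q : K) (l : nat) (s : int) : 'M[K]_l :=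
  \matrix_(i, j) (((i : nat) == j)%:R * q ^ (s + (j : nat)%:Z)).
(* c.v_j = q^(j-(s+l)) v_j  (1-based j) *)
Definition Vmx_c (K : fieldType) (q : K) (l : nat) (s : int) : 'M[K]_l :=
  \matrix_(i, j) (((i : nat) == j)%:R * q ^ (((j : nat).+1)%:Z - (s + l%:Z))).
(* d.v_1 = 0, d.v_j = alpha_(j-1)(l) v_(j-1)  (1-based j) *)
Definition Vmx_d (K : fieldType) (q : K) (l : nat) : 'M[K]_l :=
  \matrix_(i, j) (((j : nat) == (i : nat).+1)%:R * alpha K q l ((i : nat).+1)%:Z).

(* Linear endomorphisms of V^{(x)k}: basis indexed by {ffun 'I_k -> 'I_l}
   (pure tensors v_(x 0) (x) ... (x) v_(x (k-1))); an operator is given by its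
   matrix coefficients  A x y = coefficient of basis vector x in A(basis y). *)

Definition op (K : Type) (k l : nat) :=
  {ffun 'I_k -> 'I_l} -> {ffun 'I_k -> 'I_l} -> K.

Definition opmul (K : fieldType) (k l : nat) (A B : op K k l) : op K k l :=
  fun x z => \sum_(y : {ffun 'I_k -> 'I_l}) A x y * B y z.
Definition op1 (K : fieldType) (k l : nat) : op K k l := fun x y => (x == y)%:R.
Definition op0 (K : fieldType) (k l : nat) : op K k l := fun _ _ => 0.
Definition opadd (K : fieldType) (k l : nat) (A B : op K k l) : op K k l :=
  fun x y => A x y + B x y.
Definition opscale (K : fieldType) (k l : nat) (c : K) (A : op K k l) : op K k l :=
  fun x y => c * A x y.

Definition tens_op (K : fieldType) (k l : nat) (X : 'I_k -> 'M[K]_l) : op K k l :=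
  fun x y => \prod_(p : 'I_k) X p (x p) (y p).

(* Action of D_n on V^{(x)k} via the iterated coproduct:
   Delta^(k)(a) = sum_p 1^{(x)p} (x) a (x) b^{(x)(k-1-p)},  Delta^(k)(b) = b^{(x)k},
   Delta^(k)(d) = sum_p 1^{(x)p} (x) d (x) c^{(x)(k-1-p)},  Delta^(k)(c) = c^{(x)k}
   (from Delta(a) = a(x)b + 1(x)a, Delta(d) = d(x)c + 1(x)d, b,c grouplike). *)
Definition skew_prim_op (K : fieldType) (k l : nat) (X G : 'M[K]_l) : op K k l :=
  fun x y => \sum_(p : 'I_k)
    tens_op K k l (fun p' : 'I_k => if (p' < p)%N then 1%:M else if p' == p then X else G) x y.

Definition act_a (K : fieldType) (q : K) (k l : nat) (s : int) : op K k l :=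
  skew_prim_op K k l (Vmx_a K l) (Vmx_b K q l s).
Definition act_b (K : fieldType) (q : K) (k l : nat) (s : int) : op K k l :=
  tens_op K k l (fun _ => Vmx_b K q l s).
Definition act_c (K : fieldType) (q : K) (k l : nat) (s : int) : op K k l :=
  tens_op K k l (fun _ => Vmx_c K q l s).
Definition act_d (K : fieldType) (q : K) (k l : nat) (s : int) : op K k l :=
  skew_prim_op K k l (Vmx_d K q l) (Vmx_c K q l s).

(* f lies in End_{D_n}(V^{(x)k}): it commutes with the action of the algebra
   generators a, b, c, d of D_n (hence with the action of all of D_n). *)
Definition is_Dn_endo (K : fieldType) (q : K) (k l : nat) (s : int) (f : op K k l) : Prop :=
  [/\ opmul K k l f (act_a K q k l s) = opmul K k l (act_a K q k l s) f,
      opmul K k l f (act_b K q k l s) = opmul K k l (act_b K q k l s) f,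
      opmul K k l f (act_c K q k l s) = opmul K k l (act_c K q k l s) f &
      opmul K k l f (act_d K q k l s) = opmul K k l (act_d K q k l s) f].

(* The R-matrix  R = 1/n sum_{m,s,t<n} q^{-tm}/[s]! a^s b^t (x) c^m d^s.     *)

Definition qint (K : fieldType) (q : K) (m : nat) : K := \sum_(i < m) q ^+ i.
Definition qfact (K : fieldType) (q : K) (m : nat) : K :=
  \prod_(1 <= j < m.+1) qint K q j.

(* coefficient of v_x1 (x) v_x2 in R(v_y1 (x) v_y2) on V(l,s) (x) V(l,s) *)
Definition Rmat (K : fieldType) (n : nat) (q : K) (l : nat) (s0 : int)
  (x1 x2 y1 y2 : 'I_l) : K :=
  (n%:R)^-1 * \sum_(m < n) \sum_(s < n) \sum_(t < n)
     (q ^- (t * m) / qfact K q s) *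
     ((Vmx_a K l ^+ s *m Vmx_b K q l s0 ^+ t) x1 y1 *
      (Vmx_c K q l s0 ^+ m *m Vmx_d K q l ^+ s) x2 y2).

(* Rcheck = sigma o R *)
Definition Rcheck (K : fieldType) (n : nat) (q : K) (l : nat) (s0 : int)
  (z1 z2 y1 y2 : 'I_l) : K := Rmat K n q l s0 z2 z1 y1 y2.

(* Rcheck_i = id^{(x)(i-1)} (x) Rcheck (x) id^{(x)(k-i-1)}, acting on tensor
   slots i, i+1 (1-based), i.e. 0-based positions i-1 and i; 1 <= i <= k-1. *)
Definition Rcheck_i (K : fieldType) (n : nat) (q : K) (k l : nat) (s0 : int)
  (i : nat) : op K k l :=
  fun x y =>
    match (insub i.-1 : option 'I_k), (insub i : option 'I_k) with
    | Some p1, Some p2 =>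
        (\prod_(p : 'I_k | (p != p1) && (p != p2)) (x p == y p)%:R) *
        Rcheck K n q l s0 (x p1) (x p2) (y p1) (y p2)
    | _, _ => 0
    end.

(* The Iwahori-Hecke algebra H_k(q) is presented by generators s_1..s_(k-1)
   and relations; an algebra homomorphism H_k(q) -> End(W) with s_i |-> S i
   exists iff the S i satisfy the defining relations.  We state the claim
   "there is an algebra homomorphism H_k(q) -> End_{D_n}(W), s_i |-> S i" as:
   the S i (1 <= i <= k-1) lie in End_{D_n}(W) and satisfy the relations.   *)
Definition hecke_hom_into_EndDn (K : fieldType) (q : K) (k l : nat) (s0 : int)
  (S : nat -> op K k l) : Prop :=
  [/\ (forall i, (1 <= i <= k.-1)%N -> is_Dn_endo K q k l s0 (S i)),
      (forall i j, (1 <= i <= k.-1)%N -> (1 <= j <= k.-1)%N ->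
         (i.+1 < j)%N \/ (j.+1 < i)%N ->
         opmul K k l (S i) (S j) = opmul K k l (S j) (S i)),
      (forall i, (1 <= i)%N -> (i <= k - 2)%N ->
         opmul K k l (S i) (opmul K k l (S i.+1) (S i)) = opmul K k l (S i.+1) (opmul K k l (S i) (S i.+1))) &
      (forall i, (1 <= i <= k.-1)%N ->
         opmul K k l (opadd K k l (S i) (opscale K k l (-1) (op1 K k l)))
               (opadd K k l (S i) (opscale K k l (q^-1) (op1 K k l))) = op0 K k l)].

(* Main.v *)
Require Import Defs.
From HB Require Import structures.
From mathcomp Require Import all_boot all_order all_algebra.
From mathcomp Require Import ring lra zify.
From Stdlib Require Import FunctionalExtensionality.
Import GRing.Theory.
Local Open Scope ring_scope.

Lemma geo_inner (K : fieldType) n (q : K) (hq : n.-primitive_root q) (n0 : (0 < n)%N)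
  (e m : nat) (hm : (m < n)%N) :
  \sum_(t < n) q ^- (t * m) * (q ^+ e) ^+ t = if m == (e %% n)%N then n%:R else 0.
Proof.
have qu : q != 0.
  apply/negP => /eqP q0; have := prim_expr_order hq; rewrite q0 expr0n.
  by case: n n0 {hq hm} => // n0 _ /= /esym/eqP; rewrite oner_eq0.
have -> : \sum_(t < n) q ^- (t * m) * (q ^+ e) ^+ t =
          \sum_(t < n) (q ^+ e / q ^+ m) ^+ t.
  apply: eq_bigr => t _; rewrite exprMn exprVn -!exprM mulnC mulrC //.
have zn : (q ^+ e / q ^+ m) ^+ n = 1.
  by rewrite exprMn exprVn -!exprM [(e * n)%N]mulnC [(m * n)%N]mulnC !exprM (prim_expr_order hq) !expr1n invr1 mulr1.
have [hme | hme] := eqVneq m (e %% n)%N.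
  have -> : q ^+ e / q ^+ m = 1.
    by rewrite -(prim_expr_mod hq e) -hme divff // expf_neq0.
  by rewrite (eq_bigr (fun _ => 1)) ?sumr_const ?card_ord // => t _; rewrite expr1n.
have z1 : q ^+ e / q ^+ m != 1.
  apply/negP => /eqP h; apply: (negP hme).
  have : q ^+ e == q ^+ m by rewrite -[q ^+ e](divfK (expf_neq0 m qu)) h mul1r.
  by rewrite (eq_prim_root_expr hq) => /eqP ->; rewrite modn_small.
have := subrX1 (q ^+ e / q ^+ m) n; rewrite zn subrr => /esym /eqP.
by rewrite mulf_eq0 subr_eq0 (negbTE z1) /= => /eqP.
Qed.

Lemma geo_sum (K : fieldType) n (q : K) (hq : n.-primitive_root q) (n0 : (0 < n)%N)
  (e : nat) (g : K) :
  \sum_(m < n) \sum_(t < n) q ^- (t * m) * (q ^+ e) ^+ t * g ^+ m = n%:R * g ^+ ((e %% n)%N).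
Proof.
rewrite (eq_bigr (fun m : 'I_n => (if (m : nat) == (e %% n)%N then n%:R else 0) * g ^+ m)); last first.
  by move=> m _; rewrite -mulr_suml geo_inner.
rewrite (bigD1 (Ordinal (ltn_pmod e n0))) //= eqxx big1 ?addr0 // => m.
by rewrite -val_eqE /= => /negbTE ->; rewrite mul0r.
Qed.
Definition dg {K : fieldType} {l} (f : 'I_l -> K) : 'M[K]_l :=
  \matrix_(i, j) (((i : nat) == j)%:R * f j).

Lemma mul_dg_r (K : fieldType) m l (M : 'M[K]_(m, l)) (f : 'I_l -> K) i j :
  (M *m dg f) i j = M i j * f j.
Proof.
rewrite /dg.
rewrite mxE (bigD1 j) // big1 ?addr0; first by rewrite mxE eqxx mul1r /= addr0.
by move=> k /andP [_ hk]; rewrite -val_eqE /= in hk; rewrite mxE (negbTE hk) mul0r mulr0.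
Qed.

Lemma mul_dg_l (K : fieldType) m l (M : 'M[K]_(l, m)) (f : 'I_l -> K) i j :
  (dg f *m M) i j = f i * M i j.
Proof.
rewrite /dg.
rewrite mxE (bigD1 i) // big1 ?addr0; first by rewrite mxE eqxx mul1r /= addr0.
move=> k /andP [_ hk]; rewrite mxE eq_sym.
by rewrite -val_eqE /= in hk; rewrite (negbTE hk) mul0r mul0r.
Qed.

Lemma dg_exp (K : fieldType) l (f : 'I_l -> K) t :
  dg f ^+ t = dg (fun j => f j ^+ t).
Proof.
elim: t => [|t IH].
  apply/matrixP => i j; rewrite /dg !mxE expr0 mulr1.
  by rewrite -val_eqE.
rewrite exprSr IH; apply/matrixP => i j.
by rewrite mul_dg_r /dg !mxE exprSr mulrA.
Qed.

Lemma Vmx_b_dg (K : fieldType) q l s : Vmx_b K q l s = dg (fun j : 'I_l => q ^ (s + (j : nat)%:Z)).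
Proof. by apply/matrixP => i j; rewrite !mxE. Qed.
Lemma Vmx_c_dg (K : fieldType) q l s :
  Vmx_c K q l s = dg (fun j : 'I_l => q ^ (((j : nat).+1)%:Z - (s + l%:Z))).
Proof. by apply/matrixP => i j; rewrite !mxE. Qed.

Lemma Vmx_b_exp (K : fieldType) q l s t :
  Vmx_b K q l s ^+ t = dg (fun j : 'I_l => (q ^ (s + (j : nat)%:Z)) ^+ t).
Proof.
elim: t => [|t IH].
  by apply/matrixP => i j; rewrite /dg !mxE expr0 mulr1 -val_eqE.
by rewrite exprSr IH Vmx_b_dg; apply/matrixP => i j; rewrite mul_dg_r /dg !mxE exprSr mulrA.
Qed.
Lemma Vmx_c_exp (K : fieldType) q l s t :
  Vmx_c K q l s ^+ t = dg (fun j : 'I_l => (q ^ (((j : nat).+1)%:Z - (s + l%:Z))) ^+ t).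
Proof.
elim: t => [|t IH].
  by apply/matrixP => i j; rewrite /dg !mxE expr0 mulr1 -val_eqE.
by rewrite exprSr IH Vmx_c_dg; apply/matrixP => i j; rewrite mul_dg_r /dg !mxE exprSr mulrA.
Qed.

Lemma Vmx_a2 (K : fieldType) : Vmx_a K 2 ^+ 2 = 0.
Proof.
apply/matrixP => i j; rewrite expr2 !mxE big_ord_recr big_ord_recr big_ord0 /= !mxE.
by case: i => [[|[|i]] hi] //=; case: j => [[|[|j]] hj]; rewrite ?mul0r ?mulr0 ?addr0.
Qed.

Lemma Vmx_a_exp (K : fieldType) s : (2 <= s)%N -> Vmx_a K 2 ^+ s = 0.
Proof. by move=> hs; rewrite -(subnK hs) exprD Vmx_a2 mulr0. Qed.

Lemma geo_sum2 (K : fieldType) n (q : K) (hq : n.-primitive_root q) (n0 : (0 < n)%N)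
  (e : nat) (c1 c2 g : K) :
  \sum_(m < n) \sum_(t < n) q ^- (t * m) / 1 * ((c1 * (q ^+ e) ^+ t) * (c2 * g ^+ m))
  = c1 * c2 * (n%:R * g ^+ (e %% n)%N).
Proof.
rewrite -(@geo_sum K n q hq n0 e g) mulr_sumr; apply: eq_bigr => m _.
rewrite mulr_sumr; apply: eq_bigr => t _.
by rewrite divr1; ring.
Qed.

Definition gamf {K : fieldType} (q : K) (r : nat) (j : 'I_2) : K :=
  q ^ (((j : nat).+1)%:Z - (r%:Z + 2%:Z)).

Lemma Rmat_eq (K : fieldType) (hchar : [pchar K] =i pred0) n (hn : (2 <= n)%N) (q : K)
  (hq : n.-primitive_root q) (r : nat) (x1 x2 y1 y2 : 'I_2) :
  Rmat K n q 2 r%:Z x1 x2 y1 y2 =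
   (x1 == y1)%:R * (x2 == y2)%:R * gamf q r y2 ^+ ((r + y1) %% n)%N
    + Vmx_a K 2 x1 y1 * Vmx_d K q 2 x2 y2 * gamf q r x2 ^+ ((r + y1) %% n)%N.
Proof.
set gam := gamf q r.
have nz : (n%:R : K) != 0.
  by rewrite ((pcharf0P K).1 hchar n) -lt0n (leq_trans _ hn).
rewrite /Rmat exchange_big /=.
case: n hn hq nz => [|[|n']] // _ hq nz.
rewrite big_ord_recl big_ord_recl [X in _ + (_ + X)]big1 ?addr0; last first.
  move=> i _; apply: big1 => m _; apply: big1 => t _.
  rewrite Vmx_a_exp; last by rewrite /= /bump /=.
  by rewrite mul0mx mxE mul0r mulr0.
have h0 : ((ord0 : 'I_n'.+2) : nat) = 0%N by [].
have h1 : ((lift ord0 ord0 : 'I_n'.+2) : nat) = 1%N by [].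
have f0 : qfact K q 0 = 1 by rewrite /qfact big_geq.
have f1 : qfact K q 1 = 1 by rewrite /qfact big_nat1 /qint big_ord1 expr0.
rewrite h0 h1 f0 f1 !expr0 !expr1.
have bq (y : 'I_2) : q ^ (r%:Z + (y : nat)%:Z) = q ^+ (r + y) by rewrite -PoszD.
rewrite (eq_bigr (fun m : 'I_n'.+2 => \sum_(t < n'.+2) q ^- (t * m) / 1 *
   ((((x1 : nat) == y1)%:R * (q ^+ (r + y1)) ^+ t) * (((x2 : nat) == y2)%:R * gam y2 ^+ m)))); last first.
  move=> m _; apply: eq_bigr => t _.
  by rewrite mul1mx mulmx1 Vmx_b_exp Vmx_c_exp /dg !mxE bq.
rewrite [X in _ * (_ + X)](eq_bigr (fun m : 'I_n'.+2 => \sum_(t < n'.+2) q ^- (t * m) / 1 *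
   ((Vmx_a K 2 x1 y1 * (q ^+ (r + y1)) ^+ t) * (Vmx_d K q 2 x2 y2 * gam x2 ^+ m)))); last first.
  move=> m _; apply: eq_bigr => t _.
  by rewrite Vmx_b_exp Vmx_c_exp mul_dg_r mul_dg_l bq [_ * Vmx_d _ _ _ _ _]mulrC.
rewrite !(@geo_sum2 K n'.+2 q hq) // !val_eqE.
move: nz; set N := n'.+2%:R => nz. by rewrite mulrDr !(mulrCA N^-1) !mulVKf.
Qed.

Definition Tl {K : fieldType} (q u : K) (z1 z2 y1 y2 : 'I_2) : K :=
  match nat_of_ord z1, nat_of_ord z2, nat_of_ord y1, nat_of_ord y2 with
  | O, O, O, O => 1
  | S O, S O, S O, S O => 1
  | S O, O, O, S O => u
  | O, S O, O, S O => 1 - q^-1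
  | O, S O, S O, O => u^-1 * q^-1
  | _, _, _, _ => 0
  end.

Lemma Rcheck_val (K : fieldType) (hchar : [pchar K] =i pred0) n (hn : (2 <= n)%N) (q : K)
  (hq : n.-primitive_root q) (r : nat) (hr : (r < n)%N) (z1 z2 y1 y2 : 'I_2) :
  q ^+ (r * r.+1) * Rcheck K n q 2 r%:Z z1 z2 y1 y2 = Tl q (q ^+ r) z1 z2 y1 y2.
Proof.
have qu : q != 0.
  apply/negP => /eqP q0; have := prim_expr_order hq; rewrite q0 expr0n.
  by case: n hn {hq hr} => // n0 _ /= /esym/eqP; rewrite oner_eq0.
have g0 : q ^ (Posz 1 - (Posz r + Posz 2)) = (q ^+ r.+1)^-1.
  have -> : (Posz 1 - (Posz r + Posz 2)) = - Posz r.+1 by lia.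
  by rewrite -exprnN.
have g1 : q ^ (Posz 2 - (Posz r + Posz 2)) = (q ^+ r)^-1.
  have -> : (Posz 2 - (Posz r + Posz 2)) = - Posz r by lia.
  by rewrite -exprnN.
have gn k : ((q ^+ k)^-1) ^+ n = 1.
  by rewrite exprVn -exprM mulnC exprM (prim_expr_order hq) expr1n invr1.
have q1 : q != 1.
  apply/negP => /eqP h; have := eq_prim_root_expr hq 1 0.
  rewrite expr1 expr0 h eqxx => /esym; rewrite (@modn_small 1) ?mod0n //.
have qm1 : q - 1 != 0 by rewrite subr_eq0.
have alpha21 : alpha K q 2 1%:Z = 1 - q^-1.
  rewrite /alpha.
  have -> : (Posz 1 - Posz 2) = -1 by [].
  rewrite exprN1 expr1z; field; by rewrite qu qm1.
rewrite /Rcheck Rmat_eq // /gamf.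
case: z1 => [[|[|?]] ?] //; case: z2 => [[|[|?]] ?] //;
case: y1 => [[|[|?]] ?] //; case: y2 => [[|[|?]] ?] //;
rewrite /Tl /= !mxE /= ?g0 ?g1 ?addn0 ?addn1 ?(expr_mod _ (gn _)) ?(modn_small hr) ?(mul0r, mulr0, mul1r, mulr1, addr0, add0r) //;
rewrite ?alpha21 exprM !exprSr ?exprVn ?exprMn.
all: field; by rewrite ?expf_eq0 ?(negbTE qu) ?andbF.
Qed.

Section Frame.
Variables (K : fieldType) (k l : nat).
Local Notation F := {ffun 'I_k -> 'I_l}.

Definition agree (ps : seq 'I_k) (x y : F) : bool :=
  [forall p, (p \notin ps) ==> (x p == y p)].
Definition upd (x : F) (p : 'I_k) (a : 'I_l) : F :=
  [ffun j => if j == p then a else x j].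

Lemma updE x p a j : upd x p a j = if j == p then a else x j.
Proof. by rewrite ffunE. Qed.

Lemma agreeC ps x y : agree ps x y = agree ps y x.
Proof. by apply/forallP/forallP => h p; rewrite eq_sym; apply: h. Qed.

Lemma agree_perm ps ps' x y : ps =i ps' -> agree ps x y = agree ps' x y.
Proof. by move=> e; apply/forallP/forallP => h p; have := h p; rewrite e. Qed.

Lemma agree0 x y : agree [::] x y = (x == y).
Proof.
rewrite /agree; apply/forallP/eqP => [h | ->]; last by move=> p; rewrite eqxx implybT.
by apply/ffunP => p; have := h p; rewrite in_nil /= => /eqP.
Qed.

Lemma agree_upd_in ps x y p a : p \in ps -> agree ps (upd x p a) y = agree ps x y.
Proof.
move=> hp; apply/forallP/forallP => h j; have := h j; rewrite !updE;
by case: (j =P p) => [-> | _] //; rewrite hp.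
Qed.

Lemma agree_upd_out ps x y p a : p \notin ps ->
  agree ps (upd x p a) y = agree (p :: ps) x y && (a == y p).
Proof.
move=> hp; rewrite /agree; apply/forallP/andP => [h | [/forallP h1 h2] j].
  split; last by have := h p; rewrite (negbTE hp) ffunE eqxx.
  apply/forallP => j; rewrite in_cons negb_or; apply/implyP => /andP [hj1 hj2].
  by have := h j; rewrite hj2 ffunE (negbTE hj1).
rewrite ffunE; have [-> | hj] := eqVneq j p; first by rewrite h2 implybT.
apply/implyP => hj2; have := h1 j; rewrite in_cons negb_or hj hj2 /=.
by [].
Qed.

Lemma sum_delta (G : 'I_l -> K) c : \sum_a ((a == c)%:R * G a) = G c.
Proof.
rewrite (bigD1 c) //= eqxx mul1r big1 ?addr0 // => a /negbTE ->.
by rewrite mul0r.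
Qed.

Lemma sum_delta' (G : 'I_l -> K) c : \sum_a ((c == a)%:R * G a) = G c.
Proof. by rewrite -(sum_delta G c); apply: eq_bigr => a _; rewrite eq_sym. Qed.

Lemma collapse1 ps x y p : p \notin ps ->
  (agree (p :: ps) x y)%:R = \sum_a ((agree ps (upd x p a) y)%:R : K).
Proof.
move=> hp; rewrite (eq_bigr (fun a => (a == y p)%:R * (agree (p :: ps) x y)%:R)).
  by rewrite sum_delta.
by move=> a _; rewrite agree_upd_out // andbC -mulnb natrM.
Qed.

Lemma sumF_delta (G : F -> K) z : \sum_y ((z == y)%:R * G y) = G z.
Proof.
rewrite (bigD1 z) //= eqxx mul1r big1 ?addr0 // => a.
by rewrite eq_sym => /negbTE ->; rewrite mul0r.
Qed.

Definition upd2 (x : F) p1 p2 a b := upd (upd x p1 a) p2 b.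
Definition upd3 (x : F) p1 p2 p3 a b c := upd (upd (upd x p1 a) p2 b) p3 c.

Lemma collapse2 p1 p2 x (G : F -> K) : p1 != p2 ->
  \sum_y ((agree [:: p1; p2] x y)%:R * G y) =
  \sum_a \sum_b G (upd2 x p1 p2 a b).
Proof.
move=> h12.
rewrite (eq_bigr (fun y => \sum_a \sum_b ((upd2 x p1 p2 a b == y)%:R * G y))); last first.
  move=> y _; rewrite collapse1 ?inE // mulr_suml; apply: eq_bigr => a _.
  rewrite collapse1 ?inE // mulr_suml; apply: eq_bigr => b _.
  by rewrite agree0.
rewrite exchange_big; apply: eq_bigr => a _; rewrite exchange_big.
by apply: eq_bigr => b _; rewrite sumF_delta.
Qed.

Lemma collapse3 p1 p2 p3 x (G : F -> K) : p1 != p2 -> p1 != p3 -> p2 != p3 ->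
  \sum_y ((agree [:: p1; p2; p3] x y)%:R * G y) =
  \sum_a \sum_b \sum_c G (upd3 x p1 p2 p3 a b c).
Proof.
move=> h12 h13 h23.
rewrite (eq_bigr (fun y => \sum_a \sum_b \sum_c ((upd3 x p1 p2 p3 a b c == y)%:R * G y))); last first.
  move=> y _; rewrite collapse1 ?inE ?negb_or ?h12 ?h13 // mulr_suml; apply: eq_bigr => a _.
  rewrite collapse1 ?inE // mulr_suml; apply: eq_bigr => b _.
  rewrite collapse1 ?inE // mulr_suml; apply: eq_bigr => c _.
  by rewrite agree0.
rewrite exchange_big; apply: eq_bigr => a _; rewrite exchange_big.
apply: eq_bigr => b _; rewrite exchange_big.
by apply: eq_bigr => c _; rewrite sumF_delta.
Qed.


Lemma upd2_1 x p1 p2 a b : p1 != p2 -> upd2 x p1 p2 a b p1 = a.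
Proof. by move=> h; rewrite /upd2 !ffunE (negbTE h) eqxx. Qed.
Lemma upd2_2 x p1 p2 a b : upd2 x p1 p2 a b p2 = b.
Proof. by rewrite /upd2 !ffunE eqxx. Qed.
Lemma upd2_o x p1 p2 a b j : j != p1 -> j != p2 -> upd2 x p1 p2 a b j = x j.
Proof. by move=> h1 h2; rewrite /upd2 !ffunE (negbTE h1) (negbTE h2). Qed.

Definition T4 := 'I_l -> 'I_l -> 'I_l -> 'I_l -> K.
Definition loc2 p1 p2 (T : T4) : op K k l :=
  fun x y => (agree [:: p1; p2] x y)%:R * T (x p1) (x p2) (y p1) (y p2).
Definition comp2 (T T' : T4) : T4 :=
  fun x1 x2 z1 z2 => \sum_a \sum_b T x1 x2 a b * T' a b z1 z2.

Lemma mul_loc2_l p1 p2 T (B : op K k l) x z : p1 != p2 ->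
  opmul K k l (loc2 p1 p2 T) B x z =
  \sum_a \sum_b T (x p1) (x p2) a b * B (upd2 x p1 p2 a b) z.
Proof.
move=> h; rewrite /opmul /loc2.
under eq_bigr => y _ do rewrite -mulrA.
rewrite collapse2 //; apply: eq_bigr => a _; apply: eq_bigr => b _.
by rewrite upd2_1 // upd2_2.
Qed.

Lemma mul_loc2_r p1 p2 T (A : op K k l) x z : p1 != p2 ->
  opmul K k l A (loc2 p1 p2 T) x z =
  \sum_a \sum_b A x (upd2 z p1 p2 a b) * T a b (z p1) (z p2).
Proof.
move=> h; rewrite /opmul /loc2.
under eq_bigr => y _ do rewrite agreeC mulrCA.
rewrite collapse2 //; apply: eq_bigr => a _; apply: eq_bigr => b _.
by rewrite upd2_1 // upd2_2 mulrC.
Qed.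

Lemma agree_upd2_in p1 p2 x z a b :
  agree [:: p1; p2] (upd2 x p1 p2 a b) z = agree [:: p1; p2] x z.
Proof. by rewrite /upd2 !agree_upd_in ?inE ?eqxx ?orbT. Qed.

Lemma loc2_mul p1 p2 T T' : p1 != p2 ->
  opmul K k l (loc2 p1 p2 T) (loc2 p1 p2 T') = loc2 p1 p2 (comp2 T T').
Proof.
move=> h; apply: functional_extensionality => x; apply: functional_extensionality => z.
rewrite mul_loc2_l // /loc2 /comp2 mulr_sumr; apply: eq_bigr => a _.
rewrite mulr_sumr; apply: eq_bigr => b _.
by rewrite agree_upd2_in upd2_1 // upd2_2 mulrCA.
Qed.

Lemma eq_agree2 p1 p2 (x z : F) :
  (x == z) = [&& agree [:: p1; p2] x z, x p1 == z p1 & x p2 == z p2].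
Proof.
apply/eqP/and3P => [-> | [/forallP h h1 h2]]; first by rewrite /agree; split => //; apply/forallP => p; rewrite eqxx implybT.
apply/ffunP => j.
have [-> | n1] := eqVneq j p1; first by apply/eqP.
have [-> | n2] := eqVneq j p2; first by apply/eqP.
by move: (h j); rewrite !inE (negbTE n1) (negbTE n2) /= => /eqP.
Qed.

Definition id4 : T4 := fun x1 x2 z1 z2 => (x1 == z1)%:R * (x2 == z2)%:R.

Lemma op1_loc2 p1 p2 : op1 K k l = loc2 p1 p2 id4.
Proof.
apply: functional_extensionality => x; apply: functional_extensionality => z.
by rewrite /op1 /loc2 /id4 (eq_agree2 p1 p2) -!mulnb !natrM mulrA.
Qed.

Lemma op0_loc2 p1 p2 : op0 K k l = loc2 p1 p2 (fun _ _ _ _ => 0).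
Proof.
apply: functional_extensionality => x; apply: functional_extensionality => z.
by rewrite /op0 /loc2 mulr0.
Qed.

Lemma opadd_loc2 p1 p2 T T' :
  opadd K k l (loc2 p1 p2 T) (loc2 p1 p2 T') =
  loc2 p1 p2 (fun x1 x2 z1 z2 => T x1 x2 z1 z2 + T' x1 x2 z1 z2).
Proof.
apply: functional_extensionality => x; apply: functional_extensionality => z.
by rewrite /opadd /loc2 mulrDr.
Qed.

Lemma opscale_loc2 p1 p2 c T :
  opscale K k l c (loc2 p1 p2 T) = loc2 p1 p2 (fun x1 x2 z1 z2 => c * T x1 x2 z1 z2).
Proof.
apply: functional_extensionality => x; apply: functional_extensionality => z.
by rewrite /opscale /loc2 mulrCA.
Qed.


Lemma upd_id x p : upd x p (x p) = x.
Proof. by apply/ffunP => j; rewrite ffunE; case: eqP => [-> |]. Qed.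

Lemma agree_split ps p x y : p \notin ps ->
  agree ps x y = agree (p :: ps) x y && (x p == y p).
Proof. by move=> h; rewrite -agree_upd_out // upd_id. Qed.

Definition T6 := 'I_l -> 'I_l -> 'I_l -> 'I_l -> 'I_l -> 'I_l -> K.
Definition loc3 p1 p2 p3 (U : T6) : op K k l :=
  fun x y => (agree [:: p1; p2; p3] x y)%:R *
             U (x p1) (x p2) (x p3) (y p1) (y p2) (y p3).
Definition comp3 (U U' : T6) : T6 :=
  fun x1 x2 x3 z1 z2 z3 => \sum_a \sum_b \sum_c U x1 x2 x3 a b c * U' a b c z1 z2 z3.

Lemma loc3_mul p1 p2 p3 U U' : p1 != p2 -> p1 != p3 -> p2 != p3 ->
  opmul K k l (loc3 p1 p2 p3 U) (loc3 p1 p2 p3 U') = loc3 p1 p2 p3 (comp3 U U').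
Proof.
move=> h12 h13 h23.
apply: functional_extensionality => x; apply: functional_extensionality => z.
rewrite /opmul /loc3.
under eq_bigr => y _ do rewrite -mulrA.
rewrite collapse3 // /comp3 mulr_sumr; apply: eq_bigr => a _.
rewrite mulr_sumr; apply: eq_bigr => b _.
rewrite mulr_sumr; apply: eq_bigr => c _.
have e1 : upd3 x p1 p2 p3 a b c p1 = a by rewrite /upd3 !ffunE (negbTE h13) (negbTE h12) eqxx.
have e2 : upd3 x p1 p2 p3 a b c p2 = b by rewrite /upd3 !ffunE (negbTE h23) eqxx.
have e3 : upd3 x p1 p2 p3 a b c p3 = c by rewrite /upd3 !ffunE eqxx.
rewrite e1 e2 e3 /upd3 !agree_upd_in ?inE ?eqxx ?orbT //.
by rewrite mulrCA.
Qed.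

Lemma loc2_loc3_l p1 p2 p3 T : p3 != p1 -> p3 != p2 ->
  loc2 p1 p2 T = loc3 p1 p2 p3 (fun x1 x2 x3 y1 y2 y3 => T x1 x2 y1 y2 * (x3 == y3)%:R).
Proof.
move=> h1 h2.
apply: functional_extensionality => x; apply: functional_extensionality => z.
rewrite /loc2 /loc3 (@agree_split _ p3) ?inE ?negb_or ?h1 ?h2 //.
rewrite (@agree_perm (p3 :: _) [:: p1; p2; p3]); last by move=> j; rewrite !inE; case: (j == p3); rewrite ?orbT ?orbF.
by rewrite -mulnb natrM; ring.
Qed.

Lemma loc2_loc3_r p1 p2 p3 T : p1 != p2 -> p1 != p3 ->
  loc2 p2 p3 T = loc3 p1 p2 p3 (fun x1 x2 x3 y1 y2 y3 => (x1 == y1)%:R * T x2 x3 y2 y3).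
Proof.
move=> h1 h2.
apply: functional_extensionality => x; apply: functional_extensionality => z.
rewrite /loc2 /loc3 (@agree_split _ p1) ?inE ?negb_or ?h1 ?h2 //.
by rewrite -mulnb natrM; ring.
Qed.

Lemma far_mul p1 p2 p3 p4 T T' x z :
  p1 != p2 -> p1 != p3 -> p1 != p4 -> p2 != p3 -> p2 != p4 ->
  opmul K k l (loc2 p1 p2 T) (loc2 p3 p4 T') x z =
  (agree [:: p1; p2; p3; p4] x z)%:R * T (x p1) (x p2) (z p1) (z p2) *
    T' (x p3) (x p4) (z p3) (z p4).
Proof.
move=> h12 h13 h14 h23 h24.
rewrite mul_loc2_l // /loc2.
rewrite (eq_bigr (fun a => \sum_b ((a == z p1)%:R * ((b == z p2)%:R *
   ((agree [:: p1; p2; p3; p4] x z)%:R * T (x p1) (x p2) a b *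
    T' (x p3) (x p4) (z p3) (z p4)))))); last first.
  move=> a _; apply: eq_bigr => b _.
  rewrite /upd2 agree_upd_out ?inE ?negb_or ?h23 ?h24 //.
  rewrite agree_upd_out ?inE ?negb_or ?h12 ?h13 ?h14 //.
  rewrite !ffunE ![p3 == _]eq_sym ![p4 == _]eq_sym (negbTE h13) (negbTE h14) (negbTE h23) (negbTE h24).
  rewrite -!mulnb !natrM; ring.
under eq_bigr => a _ do rewrite -mulr_sumr.
by rewrite sum_delta sum_delta.
Qed.

Definition gtens p1 p2 (R : op K k l) (M : T4) : op K k l :=
  fun x y => R x y * M (x p1) (x p2) (y p1) (y p2).

Lemma mul_loc2_gtens p1 p2 T R M x z : p1 != p2 ->
  (forall x z a b, R (upd2 x p1 p2 a b) z = R x z) ->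
  opmul K k l (loc2 p1 p2 T) (gtens p1 p2 R M) x z =
  R x z * comp2 T M (x p1) (x p2) (z p1) (z p2).
Proof.
move=> h hR; rewrite mul_loc2_l // /gtens /comp2 mulr_sumr; apply: eq_bigr => a _.
rewrite mulr_sumr; apply: eq_bigr => b _.
by rewrite hR upd2_1 // upd2_2 mulrCA.
Qed.

Lemma mul_gtens_loc2 p1 p2 T R M x z : p1 != p2 ->
  (forall x z a b, R x (upd2 z p1 p2 a b) = R x z) ->
  opmul K k l (gtens p1 p2 R M) (loc2 p1 p2 T) x z =
  R x z * comp2 M T (x p1) (x p2) (z p1) (z p2).
Proof.
move=> h hR; rewrite mul_loc2_r // /gtens /comp2 mulr_sumr; apply: eq_bigr => a _.
rewrite mulr_sumr; apply: eq_bigr => b _.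
by rewrite hR upd2_1 // upd2_2 mulrA.
Qed.

Definition restp p1 p2 (X : 'I_k -> 'M[K]_l) : op K k l :=
  fun x y => \prod_(p : 'I_k | (p != p1) && (p != p2)) X p (x p) (y p).
Definition kron (M1 M2 : 'M[K]_l) : T4 := fun x1 x2 y1 y2 => M1 x1 y1 * M2 x2 y2.

Lemma tens_gtens p1 p2 X : p1 != p2 ->
  tens_op K k l X = gtens p1 p2 (restp p1 p2 X) (kron (X p1) (X p2)).
Proof.
move=> h.
apply: functional_extensionality => x; apply: functional_extensionality => z.
rewrite /tens_op /gtens /restp /kron (bigD1 p1) //= (bigD1 p2) /=; last by rewrite eq_sym h.
rewrite mulrA mulrC; congr (_ * _); apply: eq_bigl => p; by rewrite andbC.
Qed.

Lemma restp_updl p1 p2 X x z a b : restp p1 p2 X (upd2 x p1 p2 a b) z = restp p1 p2 X x z.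
Proof.
by apply: eq_bigr => p /andP [h1 h2]; rewrite upd2_o.
Qed.
Lemma restp_updr p1 p2 X x z a b : restp p1 p2 X x (upd2 z p1 p2 a b) = restp p1 p2 X x z.
Proof.
by apply: eq_bigr => p /andP [h1 h2]; rewrite upd2_o.
Qed.

End Frame.

Definition o0 : 'I_2 := @Ordinal 2 0 isT.
Definition o1 : 'I_2 := @Ordinal 2 1 isT.

Lemma I2_cases (x : 'I_2) : x = o0 \/ x = o1.
Proof. by case: x => [[|[|?]] h] //; [left | right]; apply: val_inj. Qed.

Lemma sumI2 (K : fieldType) (F : 'I_2 -> K) : \sum_a F a = F o0 + F o1.
Proof.
rewrite big_ord_recr big_ord_recr big_ord0 /= add0r.
by congr (F _ + F _); apply: val_inj.
Qed.

Section Local.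
Variables (K : fieldType) (q u : K).
Hypotheses (qn0 : q != 0) (un0 : u != 0).
Local Notation T := (Tl q u).

Lemma hecke_local x1 x2 z1 z2 :
  comp2 K 2 (fun x1 x2 z1 z2 => T x1 x2 z1 z2 + (-1) * id4 K 2 x1 x2 z1 z2)
            (fun x1 x2 z1 z2 => T x1 x2 z1 z2 + q^-1 * id4 K 2 x1 x2 z1 z2) x1 x2 z1 z2 = 0.
Proof.
rewrite /comp2 !sumI2.
case: (I2_cases x1) => ->; case: (I2_cases x2) => ->;
case: (I2_cases z1) => ->; case: (I2_cases z2) => ->;
rewrite /Tl /id4 /=. 
all: by field; rewrite ?qn0 ?un0.
Qed.

Definition TA : T6 K 2 := fun x1 x2 x3 y1 y2 y3 => T x1 x2 y1 y2 * (x3 == y3)%:R.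
Definition TB : T6 K 2 := fun x1 x2 x3 y1 y2 y3 => (x1 == y1)%:R * T x2 x3 y2 y3.

Lemma comp3_TA U x1 x2 x3 z1 z2 z3 :
  comp3 K 2 TA U x1 x2 x3 z1 z2 z3 = \sum_a \sum_b T x1 x2 a b * U a b x3 z1 z2 z3.
Proof.
rewrite /comp3 /TA; apply: eq_bigr => a _; apply: eq_bigr => b _.
under eq_bigr => c _ do rewrite -mulrA.
by rewrite -mulr_sumr sum_delta'.
Qed.

Lemma comp3_TB U x1 x2 x3 z1 z2 z3 :
  comp3 K 2 TB U x1 x2 x3 z1 z2 z3 = \sum_b \sum_c T x2 x3 b c * U x1 b c z1 z2 z3.
Proof.
rewrite /comp3 /TB.
rewrite (eq_bigr (fun a => (x1 == a)%:R * \sum_b \sum_c T x2 x3 b c * U a b c z1 z2 z3)); last first.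
  move=> a _; rewrite mulr_sumr; apply: eq_bigr => b _; rewrite mulr_sumr.
  by apply: eq_bigr => c _; rewrite mulrA.
by rewrite sum_delta'.
Qed.

Lemma braid_lhs x1 x2 x3 z1 z2 z3 :
  comp3 K 2 TA (comp3 K 2 TB TA) x1 x2 x3 z1 z2 z3 =
  \sum_a \sum_b T x1 x2 a b * \sum_d (T b x3 d z3 * T a d z1 z2).
Proof.
rewrite comp3_TA; apply: eq_bigr => a _; apply: eq_bigr => b _; congr (_ * _).
rewrite comp3_TB; apply: eq_bigr => d _; rewrite /TA.
rewrite (eq_bigr (fun c => (c == z3)%:R * (T b x3 d c * T a d z1 z2))) ?sum_delta //.
by move=> c _; ring.
Qed.

Lemma braid_rhs x1 x2 x3 z1 z2 z3 :
  comp3 K 2 TB (comp3 K 2 TA TB) x1 x2 x3 z1 z2 z3 =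
  \sum_b \sum_c T x2 x3 b c * \sum_d (T x1 b z1 d * T d c z2 z3).
Proof.
rewrite comp3_TB; apply: eq_bigr => b _; apply: eq_bigr => c _; congr (_ * _).
rewrite comp3_TA; rewrite exchange_big; apply: eq_bigr => d _; rewrite /TB.
rewrite (eq_bigr (fun a => (a == z1)%:R * (T x1 b a d * T d c z2 z3))) ?sum_delta //.
by move=> a _; ring.
Qed.

Lemma braid_local x1 x2 x3 z1 z2 z3 :
  comp3 K 2 TA (comp3 K 2 TB TA) x1 x2 x3 z1 z2 z3 =
  comp3 K 2 TB (comp3 K 2 TA TB) x1 x2 x3 z1 z2 z3.
Proof.
rewrite braid_lhs braid_rhs.
case: (I2_cases x1) => ->; case: (I2_cases x2) => ->; case: (I2_cases x3) => ->;
case: (I2_cases z1) => ->; case: (I2_cases z2) => ->; case: (I2_cases z3) => ->.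
all: rewrite !sumI2 /Tl /= ?(mul0r, mulr0, mul1r, mulr1, addr0, add0r).
all: by field; rewrite ?qn0 ?un0.
Qed.
End Local.

Section Act.
Variables (K : fieldType) (q : K) (r : nat).
Hypotheses (qn0 : q != 0) (q1 : q != 1).
Local Notation u := (q ^+ r).
Local Notation T := (Tl q (q ^+ r)).
Local Notation B := (Vmx_b K q 2 r%:Z).
Local Notation C := (Vmx_c K q 2 r%:Z).
Local Notation A := (Vmx_a K 2).
Local Notation D := (Vmx_d K q 2).

Lemma un0 : u != 0. Proof. exact: expf_neq0. Qed.

Lemma entries :
  [/\ B o0 o0 = u, B o1 o1 = u * q, B o0 o1 = 0 & B o1 o0 = 0] /\
  [/\ C o0 o0 = (u * q)^-1, C o1 o1 = u^-1, C o0 o1 = 0 & C o1 o0 = 0] /\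
  [/\ A o1 o0 = 1, A o0 o0 = 0, A o0 o1 = 0 & A o1 o1 = 0] /\
  [/\ D o0 o1 = 1 - q^-1, D o0 o0 = 0, D o1 o0 = 0 & D o1 o1 = 0] /\
  [/\ (1%:M : 'M[K]_2) o0 o0 = 1, (1%:M : 'M[K]_2) o1 o1 = 1,
      (1%:M : 'M[K]_2) o0 o1 = 0 & (1%:M : 'M[K]_2) o1 o0 = 0].
Proof.
have qm1 : q - 1 != 0 by rewrite subr_eq0.
rewrite !mxE /=.
split; [split|split; [split|split; [split|split; [split|split]]]] => //;
  rewrite ?mul1r ?mul0r //.
- by rewrite addr0.
- by rewrite -PoszD addn1 -exprnP exprSr.
- have -> : (Posz 1 - (Posz r + Posz 2)) = - Posz r.+1 by lia.
  by rewrite -exprnN exprSr.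
- have -> : (Posz 2 - (Posz r + Posz 2)) = - Posz r by lia.
  by rewrite -exprnN.
- rewrite /alpha.
  have -> : (Posz 1 - Posz 2) = -1 by [].
  rewrite exprN1 expr1z; field; by rewrite qn0 qm1.
Qed.

Lemma Eb00 : B o0 o0 = u. Proof. by have [[b00 b11 b01 b10] [[c00 c11 c01 c10] [[a10 a00 a01 a11] [[d01 d00 d10 d11] [e00 e11 e01 e10]]]]] := entries; rewrite b00. Qed.
Lemma Eb11 : B o1 o1 = u * q. Proof. by have [[b00 b11 b01 b10] [[c00 c11 c01 c10] [[a10 a00 a01 a11] [[d01 d00 d10 d11] [e00 e11 e01 e10]]]]] := entries; rewrite b11. Qed.
Lemma Eb01 : B o0 o1 = 0. Proof. by have [[b00 b11 b01 b10] [[c00 c11 c01 c10] [[a10 a00 a01 a11] [[d01 d00 d10 d11] [e00 e11 e01 e10]]]]] := entries; rewrite b01. Qed.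
Lemma Eb10 : B o1 o0 = 0. Proof. by have [[b00 b11 b01 b10] [[c00 c11 c01 c10] [[a10 a00 a01 a11] [[d01 d00 d10 d11] [e00 e11 e01 e10]]]]] := entries; rewrite b10. Qed.
Lemma Ec00 : C o0 o0 = (u * q)^-1. Proof. by have [[b00 b11 b01 b10] [[c00 c11 c01 c10] [[a10 a00 a01 a11] [[d01 d00 d10 d11] [e00 e11 e01 e10]]]]] := entries; rewrite c00. Qed.
Lemma Ec11 : C o1 o1 = u^-1. Proof. by have [[b00 b11 b01 b10] [[c00 c11 c01 c10] [[a10 a00 a01 a11] [[d01 d00 d10 d11] [e00 e11 e01 e10]]]]] := entries; rewrite c11. Qed.
Lemma Ec01 : C o0 o1 = 0. Proof. by have [[b00 b11 b01 b10] [[c00 c11 c01 c10] [[a10 a00 a01 a11] [[d01 d00 d10 d11] [e00 e11 e01 e10]]]]] := entries; rewrite c01. Qed.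
Lemma Ec10 : C o1 o0 = 0. Proof. by have [[b00 b11 b01 b10] [[c00 c11 c01 c10] [[a10 a00 a01 a11] [[d01 d00 d10 d11] [e00 e11 e01 e10]]]]] := entries; rewrite c10. Qed.
Lemma Ea10 : A o1 o0 = 1. Proof. by have [[b00 b11 b01 b10] [[c00 c11 c01 c10] [[a10 a00 a01 a11] [[d01 d00 d10 d11] [e00 e11 e01 e10]]]]] := entries; rewrite a10. Qed.
Lemma Ea00 : A o0 o0 = 0. Proof. by have [[b00 b11 b01 b10] [[c00 c11 c01 c10] [[a10 a00 a01 a11] [[d01 d00 d10 d11] [e00 e11 e01 e10]]]]] := entries; rewrite a00. Qed.
Lemma Ea01 : A o0 o1 = 0. Proof. by have [[b00 b11 b01 b10] [[c00 c11 c01 c10] [[a10 a00 a01 a11] [[d01 d00 d10 d11] [e00 e11 e01 e10]]]]] := entries; rewrite a01. Qed.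
Lemma Ea11 : A o1 o1 = 0. Proof. by have [[b00 b11 b01 b10] [[c00 c11 c01 c10] [[a10 a00 a01 a11] [[d01 d00 d10 d11] [e00 e11 e01 e10]]]]] := entries; rewrite a11. Qed.
Lemma Ed01 : D o0 o1 = 1 - q^-1. Proof. by have [[b00 b11 b01 b10] [[c00 c11 c01 c10] [[a10 a00 a01 a11] [[d01 d00 d10 d11] [e00 e11 e01 e10]]]]] := entries; rewrite d01. Qed.
Lemma Ed00 : D o0 o0 = 0. Proof. by have [[b00 b11 b01 b10] [[c00 c11 c01 c10] [[a10 a00 a01 a11] [[d01 d00 d10 d11] [e00 e11 e01 e10]]]]] := entries; rewrite d00. Qed.
Lemma Ed10 : D o1 o0 = 0. Proof. by have [[b00 b11 b01 b10] [[c00 c11 c01 c10] [[a10 a00 a01 a11] [[d01 d00 d10 d11] [e00 e11 e01 e10]]]]] := entries; rewrite d10. Qed.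
Lemma Ed11 : D o1 o1 = 0. Proof. by have [[b00 b11 b01 b10] [[c00 c11 c01 c10] [[a10 a00 a01 a11] [[d01 d00 d10 d11] [e00 e11 e01 e10]]]]] := entries; rewrite d11. Qed.
Lemma Ee00 : (1%:M : 'M[K]_2) o0 o0 = 1. Proof. by have [[b00 b11 b01 b10] [[c00 c11 c01 c10] [[a10 a00 a01 a11] [[d01 d00 d10 d11] [e00 e11 e01 e10]]]]] := entries; rewrite e00. Qed.
Lemma Ee11 : (1%:M : 'M[K]_2) o1 o1 = 1. Proof. by have [[b00 b11 b01 b10] [[c00 c11 c01 c10] [[a10 a00 a01 a11] [[d01 d00 d10 d11] [e00 e11 e01 e10]]]]] := entries; rewrite e11. Qed.
Lemma Ee01 : (1%:M : 'M[K]_2) o0 o1 = 0. Proof. by have [[b00 b11 b01 b10] [[c00 c11 c01 c10] [[a10 a00 a01 a11] [[d01 d00 d10 d11] [e00 e11 e01 e10]]]]] := entries; rewrite e01. Qed.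
Lemma Ee10 : (1%:M : 'M[K]_2) o1 o0 = 0. Proof. by have [[b00 b11 b01 b10] [[c00 c11 c01 c10] [[a10 a00 a01 a11] [[d01 d00 d10 d11] [e00 e11 e01 e10]]]]] := entries; rewrite e10. Qed.

Lemma comm_BB x1 x2 z1 z2 :
  comp2 K 2 T (kron K 2 B B) x1 x2 z1 z2 = comp2 K 2 (kron K 2 B B) T x1 x2 z1 z2.
Proof.
rewrite /comp2 !sumI2 /kron;
case: (I2_cases x1) => ->; case: (I2_cases x2) => ->;
case: (I2_cases z1) => ->; case: (I2_cases z2) => ->;
rewrite ?Eb00 ?Eb11 ?Eb01 ?Eb10 ?Ec00 ?Ec11 ?Ec01 ?Ec10 ?Ea10 ?Ea00 ?Ea01 ?Ea11 ?Ed01 ?Ed00 ?Ed10 ?Ed11 ?Ee00 ?Ee11 ?Ee01 ?Ee10 /Tl /= ?(mul0r, mulr0, mul1r, mulr1, addr0, add0r) //;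
field; by rewrite ?qn0 ?un0.
Qed.

Lemma comm_CC x1 x2 z1 z2 :
  comp2 K 2 T (kron K 2 C C) x1 x2 z1 z2 = comp2 K 2 (kron K 2 C C) T x1 x2 z1 z2.
Proof.
rewrite /comp2 !sumI2 /kron;
case: (I2_cases x1) => ->; case: (I2_cases x2) => ->;
case: (I2_cases z1) => ->; case: (I2_cases z2) => ->;
rewrite ?Eb00 ?Eb11 ?Eb01 ?Eb10 ?Ec00 ?Ec11 ?Ec01 ?Ec10 ?Ea10 ?Ea00 ?Ea01 ?Ea11 ?Ed01 ?Ed00 ?Ed10 ?Ed11 ?Ee00 ?Ee11 ?Ee01 ?Ee10 /Tl /= ?(mul0r, mulr0, mul1r, mulr1, addr0, add0r) //;
field; by rewrite ?qn0 ?un0.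
Qed.

Lemma comm_11 x1 x2 z1 z2 :
  comp2 K 2 T (kron K 2 (1%:M : 'M[K]_2) (1%:M : 'M[K]_2)) x1 x2 z1 z2 = comp2 K 2 (kron K 2 (1%:M : 'M[K]_2) (1%:M : 'M[K]_2)) T x1 x2 z1 z2.
Proof.
rewrite /comp2 !sumI2 /kron;
case: (I2_cases x1) => ->; case: (I2_cases x2) => ->;
case: (I2_cases z1) => ->; case: (I2_cases z2) => ->;
rewrite ?Eb00 ?Eb11 ?Eb01 ?Eb10 ?Ec00 ?Ec11 ?Ec01 ?Ec10 ?Ea10 ?Ea00 ?Ea01 ?Ea11 ?Ed01 ?Ed00 ?Ed10 ?Ed11 ?Ee00 ?Ee11 ?Ee01 ?Ee10 /Tl /= ?(mul0r, mulr0, mul1r, mulr1, addr0, add0r) //;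
field; by rewrite ?qn0 ?un0.
Qed.

Lemma comm_AB x1 x2 z1 z2 :
  comp2 K 2 T (kron K 2 A B) x1 x2 z1 z2 + comp2 K 2 T (kron K 2 (1%:M : 'M[K]_2) A) x1 x2 z1 z2 = comp2 K 2 (kron K 2 A B) T x1 x2 z1 z2 + comp2 K 2 (kron K 2 (1%:M : 'M[K]_2) A) T x1 x2 z1 z2.
Proof.
rewrite /comp2 !sumI2 /kron;
case: (I2_cases x1) => ->; case: (I2_cases x2) => ->;
case: (I2_cases z1) => ->; case: (I2_cases z2) => ->;
rewrite ?Eb00 ?Eb11 ?Eb01 ?Eb10 ?Ec00 ?Ec11 ?Ec01 ?Ec10 ?Ea10 ?Ea00 ?Ea01 ?Ea11 ?Ed01 ?Ed00 ?Ed10 ?Ed11 ?Ee00 ?Ee11 ?Ee01 ?Ee10 /Tl /= ?(mul0r, mulr0, mul1r, mulr1, addr0, add0r) //;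
field; by rewrite ?qn0 ?un0.
Qed.

Lemma comm_DC x1 x2 z1 z2 :
  comp2 K 2 T (kron K 2 D C) x1 x2 z1 z2 + comp2 K 2 T (kron K 2 (1%:M : 'M[K]_2) D) x1 x2 z1 z2 = comp2 K 2 (kron K 2 D C) T x1 x2 z1 z2 + comp2 K 2 (kron K 2 (1%:M : 'M[K]_2) D) T x1 x2 z1 z2.
Proof.
rewrite /comp2 !sumI2 /kron;
case: (I2_cases x1) => ->; case: (I2_cases x2) => ->;
case: (I2_cases z1) => ->; case: (I2_cases z2) => ->;
rewrite ?Eb00 ?Eb11 ?Eb01 ?Eb10 ?Ec00 ?Ec11 ?Ec01 ?Ec10 ?Ea10 ?Ea00 ?Ea01 ?Ea11 ?Ed01 ?Ed00 ?Ed10 ?Ed11 ?Ee00 ?Ee11 ?Ee01 ?Ee10 /Tl /= ?(mul0r, mulr0, mul1r, mulr1, addr0, add0r) //;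
field; by rewrite ?qn0 ?un0.
Qed.

End Act.

Section Skew.
Variables (K : fieldType) (k l : nat).

Lemma opmul_sum_r (A : op K k l) (Bp : 'I_k -> op K k l) x z :
  opmul K k l A (fun x y => \sum_p Bp p x y) x z = \sum_p opmul K k l A (Bp p) x z.
Proof.
rewrite /opmul; under eq_bigr => y _ do rewrite mulr_sumr.
by rewrite exchange_big.
Qed.

Lemma opmul_sum_l (A : op K k l) (Bp : 'I_k -> op K k l) x z :
  opmul K k l (fun x y => \sum_p Bp p x y) A x z = \sum_p opmul K k l (Bp p) A x z.
Proof.
rewrite /opmul; under eq_bigr => y _ do rewrite mulr_suml.
by rewrite exchange_big.
Qed.

Definition Xsk (X G : 'M[K]_l) (p : 'I_k) : 'I_k -> 'M[K]_l :=
  fun p' => if (p' < p)%N then 1%:M else if p' == p then X else G.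

Lemma skew_comm (p1 p2 : 'I_k) (hp : (p2 : nat) = p1.+1) (T : T4 K l) (X G : 'M[K]_l) :
  (forall x1 x2 z1 z2, comp2 K l T (kron K l G G) x1 x2 z1 z2 = comp2 K l (kron K l G G) T x1 x2 z1 z2) ->
  (forall x1 x2 z1 z2, comp2 K l T (kron K l 1%:M 1%:M) x1 x2 z1 z2 =
                       comp2 K l (kron K l 1%:M 1%:M) T x1 x2 z1 z2) ->
  (forall x1 x2 z1 z2, comp2 K l T (kron K l X G) x1 x2 z1 z2 + comp2 K l T (kron K l 1%:M X) x1 x2 z1 z2 =
                       comp2 K l (kron K l X G) T x1 x2 z1 z2 + comp2 K l (kron K l 1%:M X) T x1 x2 z1 z2) ->
  opmul K k l (loc2 K k l p1 p2 T) (skew_prim_op K k l X G) =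
  opmul K k l (skew_prim_op K k l X G) (loc2 K k l p1 p2 T).
Proof.
move=> hGG h11 hXG.
have h12 : p1 != p2 by rewrite -val_eqE /= hp neq_ltn ltnSn.
apply: functional_extensionality => x; apply: functional_extensionality => z.
change (skew_prim_op K k l X G) with (fun x y => \sum_p tens_op K k l (Xsk X G p) x y).
rewrite opmul_sum_r opmul_sum_l.
under eq_bigr => p _ do rewrite (@tens_gtens K k l p1 p2 _ h12)
  (@mul_loc2_gtens K k l p1 p2 T _ _ x z h12 (@restp_updl K k l p1 p2 _)).
under [RHS]eq_bigr => p _ do rewrite (@tens_gtens K k l p1 p2 _ h12)
  (@mul_gtens_loc2 K k l p1 p2 T _ _ x z h12 (@restp_updr K k l p1 p2 _)).
have h21 : p2 != p1 by rewrite eq_sym.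
rewrite [LHS](bigD1 p1) // [RHS](bigD1 p1) //.
rewrite [X in _ + X = _](bigD1 p2) // [X in _ = _ + X](bigD1 p2) //=.
have X11 : Xsk X G p1 p1 = X by rewrite /Xsk ltnn eqxx.
have X12 : Xsk X G p1 p2 = G by rewrite /Xsk hp ltnNge leqnSn /= (negbTE h21).
have X21 : Xsk X G p2 p1 = 1%:M by rewrite /Xsk hp ltnSn.
have X22 : Xsk X G p2 p2 = X by rewrite /Xsk ltnn eqxx.
have Rp : restp K k l p1 p2 (Xsk X G p1) x z = restp K k l p1 p2 (Xsk X G p2) x z.
  apply: eq_bigr => p /andP [hp1 hp2]; rewrite /Xsk (negbTE hp1) (negbTE hp2).
  have -> : (p < p2)%N = (p < p1)%N.
    rewrite hp ltnS leq_eqVlt; suff -> : ((p : nat) == p1) = false by [].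
    by apply/negbTE; rewrite val_eqE.
  by [].
rewrite X11 X12 X21 X22 Rp.
have -> : forall (a b : K), Algebra.Algebra_add__canonical__SemiGroup_ComLaw K a b = a + b by [].
rewrite (eq_bigr (fun i => restp K k l p1 p2 (Xsk X G i) x z *
         comp2 K l (kron K l (Xsk X G i p1) (Xsk X G i p2)) T 
           (x p1) (x p2) (z p1) (z p2))); last first.
  move=> p /andP [hp1 hp2]; congr (_ * _).
  have [lt1 | gt2] : (p < p1)%N \/ (p2 < p)%N.
    move: hp1 hp2; rewrite -!val_eqE /= hp; lia.
  + have e1 : Xsk X G p p1 = G.
      by rewrite /Xsk ltnNge (ltnW lt1) /= eq_sym (negbTE hp1).
    have lp2 : (p <= p2)%N by rewrite hp; apply: leq_trans (ltnW lt1) (leqnSn _).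
    have e2 : Xsk X G p p2 = G.
      by rewrite /Xsk ltnNge lp2 /= eq_sym (negbTE hp2).
    by rewrite e1 e2 hGG.
  + have e1 : Xsk X G p p1 = 1%:M.
      by rewrite /Xsk (@ltn_trans p2) // hp.
    have e2 : Xsk X G p p2 = 1%:M by rewrite /Xsk gt2.
    by rewrite e1 e2 h11.
by rewrite !addrA -!mulrDr hXG.
Qed.
End Skew.

Lemma tens_comm (K : fieldType) k l (p1 p2 : 'I_k) (h12 : p1 != p2) (T : T4 K l) (G : 'M[K]_l) :
  (forall x1 x2 z1 z2, comp2 K l T (kron K l G G) x1 x2 z1 z2 = comp2 K l (kron K l G G) T x1 x2 z1 z2) ->
  opmul K k l (loc2 K k l p1 p2 T) (tens_op K k l (fun _ => G)) =
  opmul K k l (tens_op K k l (fun _ => G)) (loc2 K k l p1 p2 T).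
Proof.
move=> hGG.
apply: functional_extensionality => x; apply: functional_extensionality => z.
rewrite (@tens_gtens K k l p1 p2 _ h12)
  (@mul_loc2_gtens K k l p1 p2 T _ _ x z h12 (@restp_updl K k l p1 p2 _))
  (@mul_gtens_loc2 K k l p1 p2 T _ _ x z h12 (@restp_updr K k l p1 p2 _)).
by rewrite hGG.
Qed.

Lemma prod_agree (K : fieldType) k l (p1 p2 : 'I_k) (x y : {ffun 'I_k -> 'I_l}) :
  \prod_(p : 'I_k | (p != p1) && (p != p2)) ((x p == y p)%:R : K) = (agree k l [:: p1; p2] x y)%:R.
Proof.
case h: (agree k l [:: p1; p2] x y).
  apply: big1 => p /andP [h1 h2]; move/forallP: h => /(_ p).
  by rewrite !inE negb_or h1 h2 /= => /eqP ->; rewrite eqxx.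
move/negbT: h => /forallPn [p]; rewrite negb_imply !inE negb_or => /andP [/andP [h1 h2] hp].
by rewrite (bigD1 p) ?h1 ?h2 //= (negbTE hp) mul0r.
Qed.

Lemma S_loc (K : fieldType) (hchar : [pchar K] =i pred0) n (hn : (2 <= n)%N) (q : K)
  (hq : n.-primitive_root q) (r : nat) (hr : (r < n)%N) k i (p1 p2 : 'I_k)
  (e1 : (p1 : nat) = i.-1) (e2 : (p2 : nat) = i) (hi : (0 < i)%N) :
  opscale K k 2 ((q ^- (r * r.+1))^-1) (Rcheck_i K n q k 2 r%:Z i) =
  loc2 K k 2 p1 p2 (Tl q (q ^+ r)).
Proof.
apply: functional_extensionality => x; apply: functional_extensionality => y.
have h1 : (i.-1 < k)%N by rewrite -e1.
have h2 : (i < k)%N by rewrite -e2.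
rewrite /opscale /Rcheck_i (insubT (fun j => (j < k)%N) h1) (insubT (fun j => (j < k)%N) h2).
have -> : (Sub i.-1 h1 : 'I_k) = p1 by apply: val_inj; rewrite /= e1.
have -> : (Sub i h2 : 'I_k) = p2 by apply: val_inj; rewrite /= e2.
rewrite prod_agree invrK mulrCA Rcheck_val //.
Qed.

Theorem mainTheorem4 (K : closedFieldType) (hchar : [pchar K] =i pred0)
  (n : nat) (hn : (2 <= n)%N) (q : K) (hq : n.-primitive_root q)
  (r : 'I_n) (k : nat) (hk : (2 <= k)%N) :
  hecke_hom_into_EndDn K q k 2 (r : nat)%:Z
    (fun i => opscale K k 2 ((q ^- ((r : nat) * (r : nat).+1))^-1)
                      (Rcheck_i K n q k 2 (r : nat)%:Z i)).
Proof.
have qn0 : q != 0.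
  apply/negP => /eqP q0; have := prim_expr_order hq; rewrite q0 expr0n.
  by case: n hn {hq r} => // n0 _ /= /esym/eqP; rewrite oner_eq0.
have q1 : q != 1.
  apply/negP => /eqP h; have := eq_prim_root_expr hq 1 0.
  rewrite expr1 expr0 h eqxx => /esym; rewrite (@modn_small 1) ?mod0n //.
have un0 : q ^+ r != 0 by apply: expf_neq0.
have hr : (r < n)%N := ltn_ord r.
set T := Tl q (q ^+ r).
have Sl : forall i (p1 p2 : 'I_k), (p1 : nat) = i.-1 -> (p2 : nat) = i -> (0 < i)%N ->
    opscale K k 2 ((q ^- ((r : nat) * (r : nat).+1))^-1) (Rcheck_i K n q k 2 (r : nat)%:Z i) =
    loc2 K k 2 p1 p2 T.
  by move=> i p1 p2 e1 e2 hi; apply: S_loc.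
have mkpos : forall i, (1 <= i <= k.-1)%N ->
    exists p1 p2 : 'I_k, [/\ (p1 : nat) = i.-1, (p2 : nat) = i & (p2 : nat) = p1.+1].
  move=> i /andP [hi1 hi2].
  have h2 : (i < k)%N by apply: (leq_ltn_trans hi2); rewrite prednK ?ltnSn // (leq_trans _ hk).
  have h1 : (i.-1 < k)%N by apply: leq_ltn_trans (leq_pred i) h2.
  exists (Ordinal h1), (Ordinal h2); split => //=; rewrite prednK //.
split.
- move=> i hi; have [p1 [p2 [e1 e2 e3]]] := mkpos i hi.
  have hi0 : (0 < i)%N by case/andP: hi.
  have h12 : p1 != p2 by rewrite -val_eqE /= e3 neq_ltn ltnSn.
  rewrite (Sl i p1 p2) //; split.
  + apply: skew_comm => //.
    * exact: comm_BB.
    * exact: comm_11.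
    * exact: comm_AB.
  + by apply: tens_comm => //; apply: comm_BB.
  + by apply: tens_comm => //; apply: comm_CC.
  + apply: skew_comm => //.
    * exact: comm_CC.
    * exact: comm_11.
    * exact: comm_DC.
- move=> i j hi hj hij.
  have [p1 [p2 [e1 e2 e3]]] := mkpos i hi.
  have [p3 [p4 [e1' e2' e3']]] := mkpos j hj.
  have hi0 : (0 < i)%N by case/andP: hi.
  have hj0 : (0 < j)%N by case/andP: hj.
  rewrite (Sl i p1 p2) // (Sl j p3 p4) //.
  have d : [/\ p1 != p2, p1 != p3, p1 != p4, p2 != p3 & p2 != p4] /\
           [/\ p3 != p4, p3 != p1, p3 != p2, p4 != p1 & p4 != p2].
    rewrite -!val_eqE /= e1 e2 e1' e2'.
    case: hij => hij; split; split; apply/eqP; lia.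
  case: d => [[d12 d13 d14 d23 d24] [d34 d31 d32 d41 d42]].
  apply: functional_extensionality => x; apply: functional_extensionality => z.
  rewrite !far_mul //.
  rewrite (@agree_perm k 2 [:: p3; p4; p1; p2] [:: p1; p2; p3; p4]); first by ring.
  by move=> y; rewrite !inE; case: (y == p1); case: (y == p2); case: (y == p3); case: (y == p4).
- move=> i hi1 hi2.
  have hiA : (1 <= i <= k.-1)%N.
    by rewrite hi1 /=; move: hi2 hk; rewrite -!subn1; lia.
  have hiB : (1 <= i.+1 <= k.-1)%N.
    by rewrite /=; move: hi2 hk; rewrite -!subn1; lia.
  have [p1 [p2 [e1 e2 e3]]] := mkpos i hiA.
  have [p2' [p3 [e1' e2' e3']]] := mkpos i.+1 hiB.
  have ep : p2' = p2 by apply: val_inj; rewrite /= e1' e2.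
  subst p2'.
  rewrite (Sl i p1 p2) // (Sl i.+1 p2 p3) //.
  have d12 : p1 != p2 by rewrite -val_eqE /= e3 neq_ltn ltnSn.
  have d23 : p2 != p3 by rewrite -val_eqE /= e3' neq_ltn ltnSn.
  have d13 : p1 != p3 by rewrite -val_eqE /= e3' e3; lia.
  rewrite (@loc2_loc3_l K k 2 p1 p2 p3) 1?eq_sym //.
  rewrite (@loc2_loc3_r K k 2 p1 p2 p3) //.
  rewrite !loc3_mul //.
  congr (loc3 K k 2 p1 p2 p3 _).
  do 6 (apply: functional_extensionality => ?).
  exact: (@braid_local K q (q ^+ r) qn0 un0).
- move=> i hi; have [p1 [p2 [e1 e2 e3]]] := mkpos i hi.
  have hi0 : (0 < i)%N by case/andP: hi.
  have h12 : p1 != p2 by rewrite -val_eqE /= e3 neq_ltn ltnSn.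
  rewrite (Sl i p1 p2) // (op1_loc2 K k 2 p1 p2) !opscale_loc2 !opadd_loc2 loc2_mul //.
  rewrite (op0_loc2 K k 2 p1 p2).
  congr (loc2 K k 2 p1 p2 _).
  do 4 (apply: functional_extensionality => ?).
  exact: (@hecke_local K q (q ^+ r) qn0 un0).
Qed.
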